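(* Let $F\subsetneq K$ be fields of characteristic $t$, with $F$ a proper nonempty subfield of $K$. Let $p(x)=\sum_{k=0}^{n}a_k x^k\in K[x]$ be non-constant with $a_n\neq 0$, and let $q(x)=\sum_{j=0}^{m}b_j x^j\in K[x]\setminus F[x]$ with $b_m\neq 0$. Suppose $a_n,b_m\in F$ and $b_j\notin F$ for some $j\geq 1$. If $t\nmid n$, then $p\circ q\notin F[x]$ and $D_F(p\circ q)=D_F(q)$.
   Context: For sets $F\subset K$ and $p(x)=\sum_{k=0}^{n}a_kx^k\in K[x]$ with $a_n\neq 0$, the $F$ deficit $D_F(p)$ is defined as follows: if $p\in K[x]\setminus F[x]$, then $D_F(p)=n-\max\{0\le k\le n: a_k\notin F\}$; if $p\in F[x]$, then $D_F(p)=n$. Here $F[x]$ denotes the set of polynomials with all coefficients in $F$. *)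

(* Defs.v *)
From mathcomp Require Import all_boot all_order all_algebra.
Set Implicit Arguments. Unset Strict Implicit. Unset Printing Implicit Defensive.
Import GRing.Theory.
Local Open Scope ring_scope.

Definition deficit (K : fieldType) (F : {pred K}) (p : {poly K}) : nat :=
  if p \is a polyOver F then (size p).-1
  else ((size p).-1 - \max_(k < size p | (p`_k)%R \notin F) (k : nat))%N.

(* Main.v *)
From HB Require Import structures.
Require Import Defs.
From mathcomp Require Import all_boot all_order all_algebra.
From mathcomp Require Import zify.
Import GRing.Theory.
Local Open Scope ring_scope.

Lemma top_term (K : fieldType) (A B : {poly K}) (l : K) (m a c : nat) :
  size A = m.+1 -> size B = m.+1 -> lead_coef A = l -> lead_coef B = l ->
  size (A ^+ a * B ^+ c) = ((a + c) * m).+1 /\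
  lead_coef (A ^+ a * B ^+ c) = l ^+ (a + c).
Proof.
move=> sA sB lA lB.
have A0 : A != 0 by rewrite -size_poly_eq0 sA.
have B0 : B != 0 by rewrite -size_poly_eq0 sB.
have Aa0 : A ^+ a != 0 by rewrite expf_neq0.
have Bc0 : B ^+ c != 0 by rewrite expf_neq0.
split; last by rewrite lead_coefM !lead_coef_exp lA lB exprD.
rewrite size_mul //.
have h1 := size_exp A a; have h2 := size_exp B c.
rewrite sA /= in h1; rewrite sB /= in h2.
have sa : size (A ^+ a) = (m * a).+1 by rewrite -h1 prednK // size_poly_gt0.
have sc : size (B ^+ c) = (m * c).+1 by rewrite -h2 prednK // size_poly_gt0.
rewrite sa sc mulnDl; lia.
Qed.

Section Main.
Variables (K : fieldType) (F : {pred K}) (HFsub : divring_closed F).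
HB.instance Definition _ := GRing.isDivringClosed.Build K F HFsub.

Lemma main_lemma (p q : {poly K})
  (Hp : (1 < size p)%N)
  (Hq : q \isn't a polyOver F)
  (Hlp : lead_coef p \in F) (Hlq : lead_coef q \in F)
  (Hj : exists2 j : nat, (1 <= j)%N & q`_j \notin F)
  (Hchar : forall t : nat, t \in [pchar K] -> ~~ (t %| (size p).-1)%N) :
  (p \Po q) \isn't a polyOver F /\ deficit F (p \Po q) = deficit F q.
Proof.
set n := (size p).-1.
set m := (size q).-1.
set r := (\max_(k < size q | (q`_k)%R \notin F) (k : nat))%N.
have Esp : size p = n.+1 by rewrite /n prednK // ltnW.
have n1 : (1 <= n)%N by rewrite /n -ltnS prednK // ltnW.
have nK : n%:R != 0 :> K.
  apply/negP => /eqP h0.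
  have [t ht] := natf0_pchar n1 (introT eqP h0).
  by move: (Hchar t ht); rewrite (dvdn_pcharf ht) h0 eqxx.
have coef_out k : (size q <= k)%N -> q`_k \in F.
  by move=> hk; rewrite nth_default // rpred0.
have hrmax k : (r < k)%N -> q`_k \in F.
  move=> hk; case: (ltnP k (size q)) => hks; last exact: coef_out.
  apply: contraTT hk => hkF; rewrite -leqNgt.
  exact: (@leq_bigmax_cond _ (fun k : 'I_(size q) => q`_k \notin F) (fun k => k : nat) (Ordinal hks)).
have [j j1 hjF] := Hj.
have hjs : (j < size q)%N.
  by rewrite ltnNge; apply: contra hjF => /coef_out.
have jr : (j <= r)%N.
  exact: (@leq_bigmax_cond _ (fun k : 'I_(size q) => q`_k \notin F) (fun k => k : nat) (Ordinal hjs)).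
have hrF : q`_r \notin F.
  apply/negP => hr.
  have : (r <= r.-1)%N.
    apply/bigmax_leqP => i hi.
    have : (i <= r)%N by exact: (@leq_bigmax_cond _ (fun k : 'I_(size q) => q`_k \notin F) (fun k => k : nat) i).
    rewrite leq_eqVlt => /orP [/eqP ei|]; last by case: (r) => //.
    by move: hi; rewrite ei hr.
  by case: (r) (leq_trans j1 jr) => // r' _; rewrite ltnn.
have hrs : (r < size q)%N by rewrite ltnNge; apply: contra hrF => /coef_out.
have rm : (r < m)%N.
  rewrite ltn_neqAle -ltnS /m prednK ?hrs ?andbT //; last by apply: leq_ltn_trans hrs.
  by apply: contra hrF => /eqP ->; rewrite -lead_coefE.
have Esq : size q = m.+1 by rewrite /m prednK // (leq_ltn_trans _ hrs).
have qm : q`_m = lead_coef q by rewrite lead_coefE.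
have q0 : q != 0 by rewrite -size_poly_eq0 Esq.
have lq0 : lead_coef q != 0 by rewrite lead_coef_eq0.
have lp0 : lead_coef p != 0 by rewrite lead_coef_eq0 -size_poly_eq0 Esp.
have F0 : (0 : K) \in F by rewrite rpred0.
have qr0 : q`_r != 0 by apply: contraNneq hrF => ->.
set q2 := \poly_(i < r.+1) q`_i.
set q1 := \poly_(i < size q) (if (i <= r)%N then 0 else q`_i).
have hq : q = q1 + q2.
  apply/polyP => i; rewrite coefD !coef_poly.
  case: (leqP i r) => hir.
    by rewrite ltnS hir (leq_ltn_trans hir hrs) add0r.
  have -> : (i < r.+1)%N = false by rewrite ltnS leqNgt hir.
  case: (ltnP i (size q)) => his; first by rewrite addr0.
  by rewrite nth_default // addr0.
have sq1 : size q1 = m.+1.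
  by rewrite size_poly_eq Esq //= leqNgt rm /= qm.
have lq1 : lead_coef q1 = lead_coef q.
  by rewrite lead_coef_poly ?Esq //= leqNgt rm /= qm.
have sq2 : size q2 = r.+1 by rewrite size_poly_eq.
have lq2 : lead_coef q2 = q`_r by rewrite lead_coef_poly.
have q1F : q1 \is a polyOver F.
  apply/polyOverP => i; rewrite coef_poly.
  case: (i < size q)%N => //; case: leqP => // hi; exact: hrmax.
set S := \sum_(i < n) q ^+ (n.-1 - i) * q1 ^+ i.
have hqn : q ^+ n = q1 ^+ n + q2 * S.
  have h := subrXX q q1 n.
  have e : q - q1 = q2 by rewrite {1}hq addrC addKr.
  by rewrite e in h; rewrite -/S -h addrC subrK.
set D := (n.-1 * m)%N.
have hT (i : 'I_n) : size (q ^+ (n.-1 - i) * q1 ^+ i) = D.+1 /\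
    lead_coef (q ^+ (n.-1 - i) * q1 ^+ i) = lead_coef q ^+ n.-1.
  have [h1 h2] := @top_term K q q1 (lead_coef q) m (n.-1 - i) i Esq sq1 (erefl _) lq1.
  have e : (n.-1 - i + i = n.-1)%N.
    by rewrite subnK // -ltnS prednK // ltn_ord.
  by rewrite h1 h2 e /D mulnC.
have hSsize : (size S <= D.+1)%N.
  apply/leq_sizeP => k hk; rewrite coef_sum big1 // => i _.
  by rewrite nth_default // (hT i).1.
have hScoef : S`_D = n%:R * lead_coef q ^+ n.-1.
  rewrite coef_sum (eq_bigr (fun _ => lead_coef q ^+ n.-1)); last first.
    by move=> i _; rewrite -(hT i).2 lead_coefE (hT i).1.
  by rewrite sumr_const card_ord mulr_natl.
have SD0 : S`_D != 0 by rewrite hScoef mulf_neq0 // expf_neq0.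
have sS : size S = D.+1.
  apply/eqP; rewrite eqn_leq hSsize /= ltnNge; apply: contra SD0 => h.
  by rewrite nth_default.
have S0 : S != 0 by rewrite -size_poly_eq0 sS.
have q20 : q2 != 0 by rewrite -size_poly_eq0 sq2.
pose N := (D + r)%N.
have sqS : size (q2 * S) = N.+1 by rewrite size_mul // sq2 sS addSn -pred_Sn addnS addnC.
have qSN : (q2 * S)`_N = q`_r * S`_D.
  have -> : (q2 * S)`_N = lead_coef (q2 * S) by rewrite lead_coefE sqS.
  by rewrite lead_coefM lq2 lead_coefE sS.
have DN : (D < N)%N by rewrite /N -addn1 leq_add2l (leq_trans j1 jr).
have hcomp d : (D < d)%N -> (p \Po q)`_d = lead_coef p * (q ^+ n)`_d.
  move=> hd; rewrite coef_comp_poly Esp big_ord_recr big1 ?add0r; last first.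
    move=> i _; rewrite [(q ^+ i)`_d]nth_default ?mulr0 //.
    apply: leq_trans (size_poly_exp_leq q i) _; rewrite -/m.
    apply: (leq_trans _ hd); rewrite ltnS /D [X in (_ <= X)%N]mulnC.
    by apply: leq_mul => //; rewrite -ltnS prednK // ltn_ord.
  change (0 + p`_n * (q ^+ n)`_d = lead_coef p * (q ^+ n)`_d).
  by rewrite add0r lead_coefE Esp.
have hcoef d : (N <= d)%N ->
    (p \Po q)`_d = lead_coef p * ((q1 ^+ n)`_d + (q2 * S)`_d).
  by move=> hd; rewrite hcomp ?hqn ?coefD // (leq_trans DN).
have q1nF : q1 ^+ n \is a polyOver F by rewrite rpredX.
have kF : S`_D \in F by rewrite hScoef rpredM ?rpred_nat ?rpredX.
have hNF : (p \Po q)`_N \notin F.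
  rewrite hcoef // qSN; apply/negP => h.
  have cF : (q1 ^+ n)`_N \in F by exact: (polyOverP q1nF).
  have h2 : (q1 ^+ n)`_N + q`_r * S`_D \in F.
    by rewrite -(mulKf lp0 ((q1 ^+ n)`_N + _)) rpredM ?rpredV ?h ?Hlp.
  have h3 : q`_r * S`_D \in F.
    by rewrite -(addKr ((q1 ^+ n)`_N) (q`_r * S`_D)) rpredD ?rpredN ?cF ?h2.
  by move: hrF; rewrite -(mulfK SD0 q`_r) rpredM ?rpredV ?h3 ?kF.
have hgtF d : (N < d)%N -> (p \Po q)`_d \in F.
  move=> hd; rewrite hcoef ?(ltnW hd) // [(q2 * S)`_d]nth_default ?sqS //.
  by rewrite addr0 rpredM //; exact: (polyOverP q1nF).
have nm0 : (0 < n * m)%N by rewrite muln_gt0 n1 (leq_ltn_trans (leq0n r) rm).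
have spq : size (p \Po q) = (n * m).+1.
  have h := size_comp_poly p q; rewrite -/n -/m in h.
  rewrite -h prednK //; rewrite lt0n; apply/negP => /eqP h0.
  by move: nm0; rewrite -h h0.
have e : (n * m = D + m)%N by rewrite /D -{1}(prednK n1) mulSn addnC.
have notF : (p \Po q) \isn't a polyOver F.
  by apply/negP => /polyOverP h; move: (h N); rewrite (negbTE hNF).
split => //.
rewrite /deficit (negbTE notF) (negbTE Hq) -/r -/m.
have hmax : (\max_(k < size (p \Po q) | ((p \Po q)`_k)%R \notin F) (k : nat))%N = N.
  apply/eqP; rewrite eqn_leq; apply/andP; split.
    apply/bigmax_leqP => i hi; rewrite leqNgt; apply/negP => hlt.
    by rewrite hgtF in hi.
  have hN : (N < size (p \Po q))%N by rewrite spq ltnS /N e leq_add2l ltnW.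
  exact: (@leq_bigmax_cond _ (fun k : 'I_(size (p \Po q)) => (p \Po q)`_k \notin F) (fun k => k : nat) (Ordinal hN)).
rewrite hmax spq -pred_Sn /N e subnDl.
by [].
Qed.
End Main.

Theorem theorem27 (K : fieldType) (F : {pred K})
  (HFsub : divring_closed F)          (* F is a subfield of K *)
  (HFproper : exists x : K, x \notin F)
  (p q : {poly K})
  (Hp : (1 < size p)%N)               (* p non-constant *)
  (Hq : q \isn't a polyOver F)
  (Hlp : lead_coef p \in F) (Hlq : lead_coef q \in F)
  (Hj : exists2 j : nat, (1 <= j)%N & q`_j \notin F)
  (Hchar : forall t : nat, t \in [pchar K] -> ~~ (t %| (size p).-1)%N) :
  (p \Po q) \isn't a polyOver F /\ deficit F (p \Po q) = deficit F q.
Proof.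
have := @main_lemma K F HFsub p q Hp Hq Hlp Hlq Hj Hchar. exact.
Qed.
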